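(* Let $R_0^*\in SO(3)$ with unit quaternion representation $w_0^*$, and let $(y_i,x_i)$ satisfy $y_i=R_0^*x_i+\epsilon_i$ with $\epsilon_i\in\mathbb{R}^3$. Then for every $R_0\in SO(3)$ with unit quaternion representation $w_0$, $\|y_i-R_0x_i\|_2^2=w_0^\top Q_iw_0$, and $Q_i=P_i+E_i+\|\epsilon_i\|_2^2I_4$ for symmetric $4\times4$ matrices $P_i,E_i$ with the following properties: (a) $P_i$ is positive semidefinite with eigenvalues $4\|x_i\|_2^2,4\|x_i\|_2^2,0,0$ (with multiplicity), and $P_iw_0^*=0$; in particular $Q_iw_0^*=P_iw_0^*=0$ in the noiseless case $\epsilon_i=0$; (b) $E_i$ has eigenvalues $2\epsilon_i^\top R_0^*x_i+2\|\epsilon_i\|_2\|x_i\|_2$ and $2\epsilon_i^\top R_0^*x_i-2\|\epsilon_i\|_2\|x_i\|_2$, each of multiplicity $2$; for every $R_0\in SO(3)$ with unit quaternion representation $w_0$ we have $w_0^\top E_iw_0=2\epsilon_i^\top(R_0^*x_i-R_0x_i)$, and in particular $(w_0^* )^\top E_iw_0^*=0$.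
   Context: For $w=[w_1;w_2;w_3;w_4]\in\mathbb{S}^3$, $R(w)=\begin{bmatrix} w_1^2+w_2^2-w_3^2-w_4^2 & 2(w_2w_3-w_1w_4) & 2(w_2w_4+w_1w_3)\\ 2(w_2w_3+w_1w_4) & w_1^2+w_3^2-w_2^2-w_4^2 & 2(w_3w_4-w_1w_2)\\ 2(w_2w_4-w_1w_3) & 2(w_3w_4+w_1w_2) & w_1^2+w_4^2-w_2^2-w_3^2\end{bmatrix}\in SO(3)$; every rotation equals $R(w)$ for exactly two $w=\pm w$, its unit quaternion representations. $Q_i$ is the unique symmetric $4\times4$ matrix with $w^\top Q_iw=\|y_i-R(w)x_i\|_2^2$ for all $w\in\mathbb{S}^3$. *)

(* Defs.v *)
From mathcomp Require Import all_boot all_order all_algebra.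
From mathcomp Require Import reals.
Set Implicit Arguments. Unset Strict Implicit. Unset Printing Implicit Defensive.
Import Order.TTheory GRing.Theory Num.Theory.
Local Open Scope ring_scope.

Section Defs.
Variable R : realType.

Definition dotv n (u v : 'cV[R]_n) : R := \sum_(i < n) u i 0 * v i 0.
Definition norm2 n (v : 'cV[R]_n) : R := Num.sqrt (dotv v v).

Definition quadf n (Q : 'M[R]_n) (w : 'cV[R]_n) : R := (w^T *m Q *m w) 0 0.

Definition unitq (w : 'cV[R]_4) : Prop := norm2 w = 1.

Definition psd n (P : 'M[R]_n) : Prop := forall v : 'cV[R]_n, 0 <= quadf P v.

(* quaternion components w_1..w_4 are entries 0..3 *)
Definition rotq (w : 'cV[R]_4) : 'M[R]_3 :=
  let w1 := w 0 0 in
  let w2 := w 1 0 in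
  let w3 := w 2%:R 0 in
  let w4 := w 3%:R 0 in
  \matrix_(i < 3, j < 3)
   [fun k : 'I_3 * 'I_3 =>
      match (val k.1, val k.2) with
      | (0, 0)%N => w1^+2 + w2^+2 - w3^+2 - w4^+2
      | (0, 1)%N => 2 * (w2 * w3 - w1 * w4)
      | (0, 2)%N => 2 * (w2 * w4 + w1 * w3)
      | (1, 0)%N => 2 * (w2 * w3 + w1 * w4)
      | (1, 1)%N => w1^+2 + w3^+2 - w2^+2 - w4^+2
      | (1, 2)%N => 2 * (w3 * w4 - w1 * w2)
      | (2, 0)%N => 2 * (w2 * w4 - w1 * w3)
      | (2, 1)%N => 2 * (w3 * w4 + w1 * w2)
      | _ => w1^+2 + w4^+2 - w2^+2 - w3^+2
      end] (i, j).

End Defs.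

(* Main.v *)
Require Import Defs.
From mathcomp Require Import all_boot all_order all_algebra.
From mathcomp Require Import reals ring lra.
Import Order.TTheory GRing.Theory Num.Theory.
Local Open Scope ring_scope.
Set Implicit Arguments. Unset Strict Implicit.

Section Helpers.
Variable R : realType.

Lemma sum4 (F : 'I_4 -> R) : \sum_(i < 4) F i = F 0 + F 1 + F 2%:R + F 3%:R.
Proof.
rewrite !big_ord_recl big_ord0 addr0 !addrA.
by congr (_ + _ + _ + _); congr F; apply/val_inj.
Qed.

Lemma sum3 (F : 'I_3 -> R) : \sum_(i < 3) F i = F 0 + F 1 + F 2%:R.
Proof.
rewrite !big_ord_recl big_ord0 addr0 !addrA.
by congr (_ + _ + _); congr F; apply/val_inj.
Qed.

Lemma dotv3 (u v : 'cV[R]_3) :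
  dotv u v = u 0 0 * v 0 0 + u 1 0 * v 1 0 + u 2%:R 0 * v 2%:R 0.
Proof. by rewrite /dotv sum3. Qed.

Lemma dotv4 (u v : 'cV[R]_4) :
  dotv u v = u 0 0 * v 0 0 + u 1 0 * v 1 0 + u 2%:R 0 * v 2%:R 0 + u 3%:R 0 * v 3%:R 0.
Proof. by rewrite /dotv sum4. Qed.

Lemma dotv_ge0 n (u : 'cV[R]_n) : 0 <= dotv u u.
Proof. by rewrite /dotv; apply: sumr_ge0 => i _; rewrite -expr2 sqr_ge0. Qed.

Lemma norm2_sq n (u : 'cV[R]_n) : norm2 u ^+ 2 = dotv u u.
Proof. by rewrite /norm2 sqr_sqrtr // dotv_ge0. Qed.

Lemma unit_dot (w : 'cV[R]_4) : unitq w -> dotv w w = 1.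
Proof. by move=> h; rewrite -norm2_sq h expr1n. Qed.

Lemma dot_unit (w : 'cV[R]_4) : dotv w w = 1 -> unitq w.
Proof. by move=> h; rewrite /unitq /norm2 h sqrtr1. Qed.

Definition mk4 (f : nat -> nat -> R) : 'M[R]_4 := \matrix_(i < 4, j < 4) f i j.

Lemma quadf4 (f : nat -> nat -> R) (w : 'cV[R]_4) : quadf (mk4 f) w =
  \sum_(i < 4) \sum_(j < 4) w i 0 * f i j * w j 0.
Proof.
rewrite /quadf mxE; under eq_bigr => j _ do rewrite mxE big_distrl /=.
rewrite exchange_big /=; apply: eq_bigr => i _; apply: eq_bigr => j _.
by rewrite !mxE.
Qed.

Lemma v14 : nat_of_ord (1 : 'I_4) = 1%N. Proof. by []. Qed.
Lemma v24 : nat_of_ord (2%:R : 'I_4) = 2%N. Proof. by []. Qed.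
Lemma v34 : nat_of_ord (3%:R : 'I_4) = 3%N. Proof. by []. Qed.
Lemma v04 : nat_of_ord (0 : 'I_4) = 0%N. Proof. by []. Qed.
Definition vE := (v04, v14, v24, v34).


Definition MxyG {T : comNzRingType} (x1 x2 x3 y1 y2 y3 : T) (i j : nat) : T :=
  match i, j with
  | 0%N, 0%N => x1 * y1 + x2 * y2 + x3 * y3
  | 0%N, 1%N | 1%N, 0%N => x2 * y3 - x3 * y2
  | 0%N, 2%N | 2%N, 0%N => x3 * y1 - x1 * y3
  | 0%N, 3%N | 3%N, 0%N => x1 * y2 - x2 * y1
  | 1%N, 1%N => x1 * y1 - x2 * y2 - x3 * y3
  | 1%N, 2%N | 2%N, 1%N => x2 * y1 + x1 * y2
  | 1%N, 3%N | 3%N, 1%N => x3 * y1 + x1 * y3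
  | 2%N, 2%N => x2 * y2 - x1 * y1 - x3 * y3
  | 2%N, 3%N | 3%N, 2%N => x3 * y2 + x2 * y3
  | _, _ => x3 * y3 - x1 * y1 - x2 * y2
  end.

Definition EmG {T : comNzRingType} (d x1 x2 x3 e1 e2 e3 : T) (i j : nat) : T :=
  (if (i == j)%N then 2 * d else 0) - 2 * MxyG x1 x2 x3 e1 e2 e3 i j.

Definition NfG {T : comNzRingType} (x1 x2 x3 : T) (i j : nat) : T :=
  let xs k := match k with 1%N => x1 | 2%N => x2 | _ => x3 end in
  match i, j with
  | 0%N, _ => 0 | _, 0%N => 0
  | _, _ => 4 * ((if (i == j)%N then x1 * x1 + x2 * x2 + x3 * x3 else 0)
                 - xs i * xs j)
  end.

Definition Mxy (y x : 'cV[R]_3) (i j : nat) : R :=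
  MxyG (x 0 0) (x 1 0) (x 2%:R 0) (y 0 0) (y 1 0) (y 2%:R 0) i j.

Definition Lf (a : 'cV[R]_4) (i j : nat) : R :=
  let a1 := a 0 0 in let a2 := a 1 0 in let a3 := a 2%:R 0 in let a4 := a 3%:R 0 in
  match i, j with
  | 0%N, 0%N => a1 | 0%N, 1%N => a2 | 0%N, 2%N => a3 | 0%N, _ => a4
  | 1%N, 0%N => - a2 | 1%N, 1%N => a1 | 1%N, 2%N => a4 | 1%N, _ => - a3
  | 2%N, 0%N => - a3 | 2%N, 1%N => - a4 | 2%N, 2%N => a1 | 2%N, _ => a2
  | _, 0%N => - a4 | _, 1%N => a3 | _, 2%N => - a2 | _, _ => a1
  end.

Definition Nf (x : 'cV[R]_3) (i j : nat) : R := NfG (x 0 0) (x 1 0) (x 2%:R 0) i j.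

Definition Q0 (y x : 'cV[R]_3) : 'M[R]_4 :=
  mk4 (fun i j => (if (i == j)%N then dotv y y + dotv x x else 0) - 2 * Mxy y x i j).

Definition Em (d : R) (e x : 'cV[R]_3) : 'M[R]_4 :=
  mk4 (EmG d (x 0 0) (x 1 0) (x 2%:R 0) (e 0 0) (e 1 0) (e 2%:R 0)).

Definition Pm (a : 'cV[R]_4) (x : 'cV[R]_3) : 'M[R]_4 :=
  (mk4 (Lf a))^T *m mk4 (Nf x) *m mk4 (Lf a).

Ltac ex := rewrite ?quadf4 ?dotv3 ?dotv4 ?sum4 ?sum3 ?mxE ?sum4 ?sum3 ?mxE ?vE /=.

Lemma sphere (y x : 'cV[R]_3) (w : 'cV[R]_4) : unitq w ->
  norm2 (y - rotq w *m x) ^+ 2 = quadf (Q0 y x) w.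
Proof.
move=> /unit_dot hw.
rewrite norm2_sq.
transitivity (quadf (Q0 y x) w + (dotv w w - 1) * (dotv x x * dotv w w - dotv y y));
  last by rewrite hw subrr mul0r addr0.
rewrite /Q0 quadf4 !sum4 !vE /= !dotv3 !dotv4 !mxE !sum3 !mxE /=.
ring.
Qed.


Lemma dotvE n (u v : 'cV[R]_n) : dotv u v = (u^T *m v) 0 0.
Proof. by rewrite /dotv mxE; apply: eq_bigr => k _; rewrite mxE. Qed.

Lemma emE (M : 'M[R]_4) i j :
  delta_mx 0 i *m M *m delta_mx j 0 = (M i j)%:M :> 'M[R]_1.
Proof.
apply/matrixP => r c; rewrite (ord1 r) (ord1 c) -rowE -colE !mxE /=.
by rewrite mulr1n.
Qed.

Lemma quad2 (M : 'M[R]_4) (i j : 'I_4) (a b : R) :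
  ((a *: delta_mx i (0 : 'I_1) + b *: delta_mx j (0 : 'I_1))^T *m M *m
    (a *: delta_mx i (0 : 'I_1) + b *: delta_mx j (0 : 'I_1))) 0 0 =
  a ^+ 2 * M i i + a * b * (M i j + M j i) + b ^+ 2 * M j j.
Proof.
rewrite [(_ + _)^T]linearD /= ![(_ *: _)^T]linearZ /= !trmx_delta.
rewrite !mulmxDl !mulmxDr. rewrite -?scalemxAl -?scalemxAr -?scalemxAl. rewrite !emE !mxE /= !mulr1n.
ring.
Qed.

Lemma quad_unique (Q1 Q2 : 'M[R]_4) : Q1^T = Q1 -> Q2^T = Q2 ->
  (forall w, unitq w -> quadf Q1 w = quadf Q2 w) -> Q1 = Q2.
Proof.
move=> s1 s2 h.
have hD : forall a b (i j : 'I_4), (i != j -> a ^+ 2 + b ^+ 2 = 1) ->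
    (i == j -> a = 1 /\ b = 0) ->
    a ^+ 2 * (Q1 - Q2) i i + a * b * ((Q1 - Q2) i j + (Q1 - Q2) j i)
    + b ^+ 2 * (Q1 - Q2) j j = 0.
  move=> a b i j h1 h2.
  rewrite -quad2.
  have hu : unitq (a *: delta_mx i (0 : 'I_1) + b *: delta_mx j (0 : 'I_1)).
    apply: dot_unit; rewrite dotvE -[X in (_ *m X) 0 0]mul1mx mulmxA quad2 !mxE /=.
    case: (eqVneq i j) => [eij|nij].
      by move: h2; rewrite eij eqxx => /(_ isT) [-> ->] /=; ring.
    rewrite !eqxx /= -[RHS](h1 nij).
    ring.
  have mxB : forall A B : 'M[R]_1, (A - B) 0 0 = A 0 0 - B 0 0.
    by move=> A B; rewrite !mxE.
  rewrite mulmxBr mulmxBl mxB.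
  by have := h _ hu; rewrite /quadf => ->; rewrite subrr.
have hdiag : forall i, (Q1 - Q2) i i = 0.
  move=> i; have := hD 1 0 i i (fun hn => ltac:(by rewrite eqxx in hn))
    (fun _ => conj erefl erefl).
  by rewrite expr1n mul1r mulr0 mul0r expr0n /= mul0r !addr0.
have hsym : forall i j, (Q1 - Q2) j i = (Q1 - Q2) i j.
  move=> i j; have : (Q1 - Q2)^T = Q1 - Q2 by rewrite linearB /= s1 s2.
  by move/matrixP/(_ i j); rewrite mxE.
apply/matrixP => i j; apply/eqP; rewrite -subr_eq0; apply/eqP.
case: (eqVneq i j) => [<-|nij]; first by have := hdiag i; rewrite !mxE.
have h35 : (3 / 5 : R) ^+ 2 + (4 / 5) ^+ 2 = 1 by field.
have := hD (3 / 5) (4 / 5) i j (fun _ => h35) (fun e => ltac:(by rewrite e in nij)).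
rewrite !hdiag [(Q1 - Q2) j i]hsym !mxE => H.
lra.
Qed.

Lemma det_rec (T : comNzRingType) n (A : 'M[T]_n.+1) :
  \det A =
  \sum_(j < n.+1) A ord0 j * ((-1) ^+ j * \det (\matrix_(i < n, k < n) A (lift ord0 i) (lift j k))).
Proof.
rewrite (expand_det_row _ ord0); apply: eq_bigr => j _.
rewrite /cofactor add0n; congr (_ * (_ * \det _)).
by apply/matrixP => i k; rewrite !mxE.
Qed.

Lemma charp4 (f : nat -> nat -> R) : char_poly (mk4 f) =
  \det (\matrix_(i < 4, j < 4) ('X *+ (i == j :> nat) - (f i j)%:P)).
Proof. by rewrite /char_poly; congr (\det _); apply/matrixP => i j; rewrite !mxE. Qed.

Ltac det4 :=
  rewrite det_rec; rewrite !big_ord_recl !big_ord0;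
  rewrite !det_rec; rewrite !big_ord_recl !big_ord0;
  rewrite !det_rec; rewrite !big_ord_recl !big_ord0;
  rewrite !det_rec; rewrite !big_ord_recl !big_ord0;
  rewrite !det_mx00 !mxE /= /bump /= ?(addn0, add0n, add1n) /=.

Lemma det4E (T : comNzRingType) (g : nat -> nat -> T) :
  \det (\matrix_(i < 4, j < 4) g i j) = g 0%N 0%N * g 1%N 1%N * g 2%N 2%N * g 3%N 3%N - g 0%N 0%N * g 1%N 1%N * g 2%N 3%N * g 3%N 2%N - g 0%N 0%N * g 1%N 2%N * g 2%N 1%N * g 3%N 3%N + g 0%N 0%N * g 1%N 2%N * g 2%N 3%N * g 3%N 1%N + g 0%N 0%N * g 1%N 3%N * g 2%N 1%N * g 3%N 2%N - g 0%N 0%N * g 1%N 3%N * g 2%N 2%N * g 3%N 1%N - g 0%N 1%N * g 1%N 0%N * g 2%N 2%N * g 3%N 3%N + g 0%N 1%N * g 1%N 0%N * g 2%N 3%N * g 3%N 2%N + g 0%N 1%N * g 1%N 2%N * g 2%N 0%N * g 3%N 3%N - g 0%N 1%N * g 1%N 2%N * g 2%N 3%N * g 3%N 0%N - g 0%N 1%N * g 1%N 3%N * g 2%N 0%N * g 3%N 2%N + g 0%N 1%N * g 1%N 3%N * g 2%N 2%N * g 3%N 0%N + g 0%N 2%N * g 1%N 0%N * g 2%N 1%N * g 3%N 3%N - g 0%N 2%N * g 1%N 0%N * g 2%N 3%N * g 3%N 1%N - g 0%N 2%N * g 1%N 1%N * g 2%N 0%N * g 3%N 3%N + g 0%N 2%N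 * g 1%N 1%N * g 2%N 3%N * g 3%N 0%N + g 0%N 2%N * g 1%N 3%N * g 2%N 0%N * g 3%N 1%N - g 0%N 2%N * g 1%N 3%N * g 2%N 1%N * g 3%N 0%N - g 0%N 3%N * g 1%N 0%N * g 2%N 1%N * g 3%N 2%N + g 0%N 3%N * g 1%N 0%N * g 2%N 2%N * g 3%N 1%N + g 0%N 3%N * g 1%N 1%N * g 2%N 0%N * g 3%N 2%N - g 0%N 3%N * g 1%N 1%N * g 2%N 2%N * g 3%N 0%N - g 0%N 3%N * g 1%N 2%N * g 2%N 0%N * g 3%N 1%N + g 0%N 3%N * g 1%N 2%N * g 2%N 1%N * g 3%N 0%N.
Proof. det4; ring. Qed.

Ltac pushf := rewrite ?(rmorphB, rmorphD, rmorphM, rmorphN, rmorph0, rmorph1, rmorphXn, rmorph_nat).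

Lemma charN_gen (S T : comNzRingType) (f : {rmorphism S -> T}) (X : T) (x1 x2 x3 : S) :
  \det (\matrix_(i < 4, j < 4) (X *+ (i == j :> nat) - f (NfG x1 x2 x3 i j))) =
  (X - f (4 * (x1 * x1 + x2 * x2 + x3 * x3))) ^+ 2 * (X - f 0) ^+ 2.
Proof. rewrite (@det4E _ (fun i j => X *+ (i == j)%N - f (NfG x1 x2 x3 i j))) /= ?mulr1n ?mulr0n; pushf; ring. Qed.

Lemma charN (x : 'cV[R]_3) :
  char_poly (mk4 (Nf x)) = ('X - (4 * dotv x x)%:P) ^+ 2 * ('X - 0%:P) ^+ 2.
Proof. by rewrite charp4 dotv3 (@charN_gen _ _ polyC). Qed.

Lemma charE_gen (S T : comNzRingType) (f : {rmorphism S -> T}) (X : T)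
   (d b x1 x2 x3 e1 e2 e3 : S) :
  b ^+ 2 = 4 * (e1 * e1 + e2 * e2 + e3 * e3) * (x1 * x1 + x2 * x2 + x3 * x3) ->
  \det (\matrix_(i < 4, j < 4) (X *+ (i == j :> nat) - f (EmG d x1 x2 x3 e1 e2 e3 i j))) =
  (X - f (2 * d + b)) ^+ 2 * (X - f (2 * d - b)) ^+ 2.
Proof.
move=> hb.
have -> : (X - f (2 * d + b)) ^+ 2 * (X - f (2 * d - b)) ^+ 2 =
  ((X - 2 * f d) ^+ 2 - f (b ^+ 2)) ^+ 2 by pushf; ring.
rewrite hb.
rewrite (@det4E _ (fun i j => X *+ (i == j)%N - f (EmG d x1 x2 x3 e1 e2 e3 i j))) /EmG /= ?mulr1n ?mulr0n; pushf; ring.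
Qed.

Lemma charE (d b : R) (e x : 'cV[R]_3) : b ^+ 2 = 4 * dotv e e * dotv x x ->
  char_poly (Em d e x) = ('X - (2 * d + b)%:P) ^+ 2 * ('X - (2 * d - b)%:P) ^+ 2.
Proof. by rewrite !dotv3 => hb; rewrite charp4 (@charE_gen _ _ polyC _ _ _ _ _ _ _ _ _ hb). Qed.


Lemma sym4 (f : nat -> nat -> R) : (forall i j, (i < 4)%N -> (j < 4)%N -> f i j = f j i) ->
  (mk4 f)^T = mk4 f.
Proof. by move=> h; apply/matrixP => i j; rewrite !mxE h. Qed.

Ltac symt := move=> [|[|[|[|i]]]] [|[|[|[|j]]]] //= _ _; ring.

Lemma Q0_sym y x : (Q0 y x)^T = Q0 y x.
Proof. apply: sym4; rewrite /Mxy /MxyG; symt. Qed.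

Lemma Em_sym d e x : (Em d e x)^T = Em d e x.
Proof. apply: sym4; rewrite /EmG /MxyG; symt. Qed.

Lemma N_sym x : (mk4 (Nf x))^T = mk4 (Nf x).
Proof. apply: sym4; rewrite /Nf /NfG; symt. Qed.

Lemma P_sym a x : (Pm a x)^T = Pm a x.
Proof. by rewrite /Pm !trmx_mul trmxK N_sym mulmxA. Qed.

Lemma Em_quad d e x (w : 'cV[R]_4) :
  quadf (Em d e x) w = 2 * d * dotv w w - 2 * dotv e (rotq w *m x).
Proof.
rewrite /Em /EmG /MxyG quadf4 !sum4 !vE /= !dotv3 !dotv4 !mxE !sum3 !mxE /=.
ring.
Qed.

Lemma N_psd x (u : 'cV[R]_4) : 0 <= quadf (mk4 (Nf x)) u.
Proof.
have -> : quadf (mk4 (Nf x)) u = 4 * ((u 2%:R 0 * x 2%:R 0 - u 3%:R 0 * x 1 0) ^+ 2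
   + (u 3%:R 0 * x 0 0 - u 1 0 * x 2%:R 0) ^+ 2 + (u 1 0 * x 1 0 - u 2%:R 0 * x 0 0) ^+ 2).
  rewrite quadf4 !sum4 !vE /=; ring.
by rewrite mulr_ge0 // ?addr_ge0 // sqr_ge0.
Qed.

Lemma P_psd a x : psd (Pm a x).
Proof.
move=> v; have -> : quadf (Pm a x) v = quadf (mk4 (Nf x)) (mk4 (Lf a) *m v).
  by rewrite /quadf /Pm trmx_mul !mulmxA.
exact: N_psd.
Qed.


Ltac expand := rewrite ?(mxE, sum3, sum4); rewrite ?vE /= ?mulr1n ?mulr0n.

Lemma LtL (a : 'cV[R]_4) : (mk4 (Lf a))^T *m mk4 (Lf a) = (dotv a a)%:M.
Proof. rewrite dotv4; apply/matrixP => i j; case: i => [[|[|[|[|i]]]] Hi] //; case: j => [[|[|[|[|j]]]] Hj] //; expand; ring. Qed.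

Lemma char_conj (L N : 'M[R]_4) : L^T *m L = 1%:M -> char_poly (L^T *m N *m L) = char_poly N.
Proof.
move=> hL.
set L' := map_mx polyC L.
have hL' : L'^T *m L' = 1%:M by rewrite map_trmx -map_mxM hL map_mx1.
rewrite /char_poly /char_poly_mx !map_mxM -map_trmx -/L'.
have eX : ('X%:M : 'M[{poly R}]_4) = L'^T *m 'X%:M *m L'.
  by rewrite mul_mx_scalar -scalemxAl hL' scalemx1.
rewrite {1}eX -mulmxBl -mulmxBr !det_mulmx mulrAC -det_mulmx hL' det1 mul1r.
done.
Qed.

Lemma PW (a : 'cV[R]_4) x : Pm a x *m a = 0.
Proof.
rewrite /Pm -!mulmxA.
have -> : mk4 (Nf x) *m (mk4 (Lf a) *m a) = 0; last by rewrite mulmx0.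
apply/matrixP => i j; rewrite (ord1 j); case: i => [[|[|[|[|i]]]] Hi] //;
  rewrite /Nf /NfG; expand; ring.
Qed.

End Helpers.



Section H2.
Variable R : realType.

Definition PF (a : 'cV[R]_4) (x : 'cV[R]_3) (i j : nat) : R :=
  Lf a 0%N i * Nf x 0%N 0%N * Lf a 0%N j + Lf a 0%N i * Nf x 0%N 1%N * Lf a 1%N j + Lf a 0%N i * Nf x 0%N 2%N * Lf a 2%N j + Lf a 0%N i * Nf x 0%N 3%N * Lf a 3%N j + Lf a 1%N i * Nf x 1%N 0%N * Lf a 0%N j + Lf a 1%N i * Nf x 1%N 1%N * Lf a 1%N j + Lf a 1%N i * Nf x 1%N 2%N * Lf a 2%N j + Lf a 1%N i * Nf x 1%N 3%N * Lf a 3%N j + Lf a 2%N i * Nf x 2%N 0%N * Lf a 0%N j + Lf a 2%N i * Nf x 2%N 1%N * Lf a 1%N j + Lf a 2%N i * Nf x 2%N 2%N * Lf a 2%N j + Lf a 2%N i * Nf x 2%N 3%N * Lf a 3%N j + Lf a 3%N i * Nf x 3%N 0%N * Lf a 0%N j + Lf a 3%N i * Nf x 3%N 1%N * Lf a 1%N j + Lf a 3%N i * Nf x 3%N 2%N * Lf a 2%N j + Lf a 3%N i * Nf x 3%N 3%N * Lf a 3%N j.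

Lemma Pm_mk4 a x : Pm a x = mk4 (PF a x).
Proof.
apply/matrixP => i j; rewrite /Pm /PF !mxE !sum4 !mxE !sum4 !mxE !vE.
ring.
Qed.

Lemma rotx_entries (a : 'cV[R]_4) (x : 'cV[R]_3) :
  let a1 := a 0 0 in let a2 := a 1 0 in let a3 := a 2%:R 0 in let a4 := a 3%:R 0 in
  let x1 := x 0 0 in let x2 := x 1 0 in let x3 := x 2%:R 0 in
  [/\ (rotq a *m x) 0 0 = (a1^+2 + a2^+2 - a3^+2 - a4^+2) * x1 + 2 * (a2 * a3 - a1 * a4) * x2 + 2 * (a2 * a4 + a1 * a3) * x3,
      (rotq a *m x) 1 0 = 2 * (a2 * a3 + a1 * a4) * x1 + (a1^+2 + a3^+2 - a2^+2 - a4^+2) * x2 + 2 * (a3 * a4 - a1 * a2) * x3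
    & (rotq a *m x) 2%:R 0 = 2 * (a2 * a4 - a1 * a3) * x1 + 2 * (a3 * a4 + a1 * a2) * x2 + (a1^+2 + a4^+2 - a2^+2 - a3^+2) * x3].
Proof. by split; rewrite !mxE sum3 !mxE /=. Qed.

Lemma P_eq (a : 'cV[R]_4) (x : 'cV[R]_3) :
  Pm a x = mk4 (fun i j => (if (i == j)%N then 2 * dotv a a * dotv x x else 0)
                           - 2 * Mxy (rotq a *m x) x i j).
Proof.
have [h0 h1 h2] := rotx_entries a x.
rewrite Pm_mk4 /Mxy h0 h1 h2 !dotv3 !dotv4.
apply/matrixP => i j; rewrite !mxE.
case: i => [[|[|[|[|i]]]] Hi] //; case: j => [[|[|[|[|j]]]] Hj] //.
all: rewrite /PF /Lf /Nf /NfG /MxyG /=.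
all: ring.
Qed.

Lemma norm_rot (a : 'cV[R]_4) (x : 'cV[R]_3) :
  dotv (rotq a *m x) (rotq a *m x) = dotv a a ^+ 2 * dotv x x.
Proof.
have [h0 h1 h2] := rotx_entries a x.
by rewrite !dotv3 h0 h1 h2 dotv4; ring.
Qed.

Lemma Mxy_add (u e x : 'cV[R]_3) i j : Mxy (u + e) x i j = Mxy u x i j + Mxy e x i j.
Proof.
rewrite /Mxy !mxE.
by case: i => [|[|[|[|i]]]]; case: j => [|[|[|[|j]]]]; rewrite /MxyG /=; ring.
Qed.

Lemma dotv_add (u e : 'cV[R]_3) : dotv (u + e) (u + e) = dotv u u + 2 * dotv e u + dotv e e.
Proof. by rewrite !dotv3 !mxE; ring. Qed.

Lemma dotvB (e u v : 'cV[R]_3) : dotv e (u - v) = dotv e u - dotv e v.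
Proof. by rewrite !dotv3 !mxE; ring. Qed.

Lemma decomp (a : 'cV[R]_4) (x e : 'cV[R]_3) :
  Q0 (rotq a *m x + e) x = Pm a x + Em (dotv e (rotq a *m x)) e x + (dotv e e)%:M
    + ((dotv a a - 1) ^+ 2 * dotv x x)%:M.
Proof.
rewrite P_eq; apply/matrixP => i j.
rewrite /Q0 /Em !mxE Mxy_add dotv_add norm_rot /Mxy /EmG.
have -> : (i == j) = (val i == val j)%N by [].
by case: (val i == val j)%N; rewrite ?mulr1n ?mulr0n; ring.
Qed.

End H2.

Unset Implicit Arguments.

Theorem lemma3p5 (R : realType) (w0s : 'cV[R]_4) (x y eps : 'cV[R]_3)
    (Q : 'M[R]_4) :
  unitq w0s ->
  y = rotq w0s *m x + eps ->
  Q^T = Q ->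
  (forall w : 'cV[R]_4, unitq w -> quadf Q w = norm2 (y - rotq w *m x) ^+ 2) ->
  (forall w0 : 'cV[R]_4, unitq w0 -> norm2 (y - rotq w0 *m x) ^+ 2 = quadf Q w0) /\
  exists P E : 'M[R]_4,
    [/\ P^T = P, E^T = E & Q = P + E + (norm2 eps ^+ 2)%:M] /\
    (* (a) *)
    [/\ psd P,
        char_poly P = ('X - (4 * norm2 x ^+ 2)%:P) ^+ 2 * ('X - 0%:P) ^+ 2,
        P *m w0s = 0
      & (eps = 0 -> Q *m w0s = 0 /\ P *m w0s = 0)] /\
    (* (b) *)
    [/\ char_poly E =
          ('X - (2 * dotv eps (rotq w0s *m x) + 2 * norm2 eps * norm2 x)%:P) ^+ 2 *
          ('X - (2 * dotv eps (rotq w0s *m x) - 2 * norm2 eps * norm2 x)%:P) ^+ 2,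
        (forall w0 : 'cV[R]_4, unitq w0 ->
           quadf E w0 = 2 * dotv eps (rotq w0s *m x - rotq w0 *m x))
      & quadf E w0s = 0].
Proof.
move=> hw0 hy hQ hQw.
have hs : dotv w0s w0s = 1 := unit_dot hw0.
have QQ0 : Q = Q0 y x.
  apply: quad_unique => //; first exact: Q0_sym.
  by move=> w hw; rewrite hQw // sphere.
split; first by move=> w0 hw; rewrite hQw.
set d := dotv eps (rotq w0s *m x).
exists (Pm w0s x), (Em d eps x).
have hdec : Q = Pm w0s x + Em d eps x + (norm2 eps ^+ 2)%:M.
  rewrite QQ0 hy decomp hs subrr expr0n /= mul0r raddf0 addr0 norm2_sq.
  done.
split; first by split; [exact: P_sym | exact: Em_sym | exact: hdec].
split.
  split.
  - exact: P_psd.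
  - by rewrite /Pm char_conj ?charN ?norm2_sq // LtL hs.
  - exact: PW.
  - move=> he; split; last exact: PW.
    have hE : Em d eps x = 0.
      rewrite /d he; apply/matrixP => i j; rewrite !mxE /EmG dotv3 !mxE !mul0r !addr0 mulr0 if_same.
      by case: (val i) => [|[|[|[|?]]]]; case: (val j) => [|[|[|[|?]]]];
        rewrite /MxyG /=; ring.
    rewrite hdec hE addr0 he norm2_sq /dotv big1 ?raddf0 ?addr0 ?PW //.
    by move=> k _; rewrite mxE mul0r.
split.
- apply: charE.
  by rewrite !exprMn !norm2_sq; ring.
- move=> w0 hw; rewrite Em_quad unit_dot // mulr1 dotvB.
  by rewrite /d; ring.
- by rewrite Em_quad hs mulr1 /d subrr.
Qed.
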